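(* There exist a $16\times16$ bimagic square and a $25\times25$ pandiagonal bimagic square, each with pairwise distinct entries that are nonnegative integers whose decimal digits all lie in $\{0,1,2\}$, both having the same magic sum $S1=222222220$; moreover each of the sixteen $4\times4$ blocks of the first is a magic square with magic sum $55555555$, and each of the twenty-five $5\times5$ blocks of the second is a magic square with magic sum $44444444$.
   Context: A magic square of order $n$ is an $n\times n$ array of numbers in which the sums of the entries of each row, of each column and of each of the two principal diagonals all equal a common value $S1$. It is bimagic if in addition the sums of the squares of the entries of each row, each column and each of the two principal diagonals all equal a common value $S2$. It is pandiagonal if all broken diagonals also have sum $S1$. The $m\times m$ blocks of an $m^2\times m^2$ array are the subarrays with rows $mp+1,\dots,mp+m$ and columns $mq+1,\dots,mq+m$, $0\le p,q\le m-1$. *)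

(* Defs.v *)
From HB Require Import structures.
From mathcomp Require Import all_boot all_order all_algebra.
Set Implicit Arguments. Unset Strict Implicit. Unset Printing Implicit Defensive.

(* Squares of order n.+1 with natural-number entries, as matrices 'M[nat]_n.+1.
   Rows/columns indexed by 'I_n.+1 (0-based). *)

Definition row_sum n (A : 'M[nat]_n.+1) (i : 'I_n.+1) := (\sum_(j < n.+1) A i j)%N.
Definition col_sum n (A : 'M[nat]_n.+1) (j : 'I_n.+1) := (\sum_(i < n.+1) A i j)%N.
Definition diag_sum n (A : 'M[nat]_n.+1) := (\sum_(i < n.+1) A i i)%N.
Definition antidiag_sum n (A : 'M[nat]_n.+1) := (\sum_(i < n.+1) A i (rev_ord i))%N.

Definition magic_with n (A : 'M[nat]_n.+1) (S : nat) : Prop :=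
  (forall i, row_sum A i = S) /\ (forall j, col_sum A j = S) /\
  diag_sum A = S /\ antidiag_sum A = S.

Definition magic n (A : 'M[nat]_n.+1) : Prop := exists S, magic_with A S.

Definition bimagic_with n (A : 'M[nat]_n.+1) (S1 : nat) : Prop :=
  magic_with A S1 /\ exists S2, magic_with (map_mx (fun x => x ^ 2) A) S2.

Definition pandiagonal_with n (A : 'M[nat]_n.+1) (S1 : nat) : Prop :=
  forall k : 'I_n.+1,
    (\sum_(i < n.+1) A i (inord ((i + k) %% n.+1)))%N = S1 /\
    (\sum_(i < n.+1) A i (inord ((k + n.+1 - i) %% n.+1)))%N = S1.

Definition distinct_entries n (A : 'M[nat]_n.+1) : Prop :=
  injective (fun ij : 'I_n.+1 * 'I_n.+1 => A ij.1 ij.2).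

Definition digits012 (x : nat) : Prop := forall k, (x %/ 10 ^ k) %% 10 <= 2.

Definition entries_digits012 n (A : 'M[nat]_n.+1) : Prop :=
  forall i j, digits012 (A i j).

(* the (p,q) block of size m.+1 of a square of order n.+1 (used with
   n.+1 = (m.+1)^2): rows m.+1*p + i, columns m.+1*q + j *)
Definition block n m (A : 'M[nat]_n.+1) (p q : 'I_m.+1) : 'M[nat]_m.+1 :=
  \matrix_(i < m.+1, j < m.+1) A (inord (m.+1 * p + i)) (inord (m.+1 * q + j)).

(* Main.v *)
Require Import Defs.
From HB Require Import structures.
From mathcomp Require Import all_boot all_order all_algebra.
From mathcomp Require Import zify.
From Stdlib Require DecimalNat.

Definition mkA n (D : nat -> nat -> nat -> nat) : 'M[nat]_n.+1 :=
  \matrix_(i < n.+1, j < n.+1) (\sum_(k < 8) 10 ^ k * D k i j)%N.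

Definition ival n x := if x < n.+1 then x else 0.

Lemma inordE n x : nat_of_ord (@inord n x) = ival n x.
Proof. rewrite /inord /insubd /ival; case: insubP => [u -> ->|/negbTE ->] //. Qed.

Definition nsum m (G : nat -> nat) := foldr (fun j acc => G j + acc) 0 (iota 0 m).

Lemma nsumE m (G : nat -> nat) : (\sum_(j < m) G j)%N = nsum m G.
Proof.
rewrite -(big_mkord xpredT) /index_iota subn0 /nsum.
elim: (iota 0 m) => [|x s IH]; first by rewrite big_nil.
by rewrite big_cons IH.
Qed.

Lemma line_gen n (D : nat -> nat -> nat -> nat) m (f g : 'I_m -> 'I_n.+1) c :
  (forall k, k < 8 -> (\sum_(i < m) D k (f i) (g i))%N = c) ->
  (\sum_(i < m) mkA n D (f i) (g i))%N = (\sum_(k < 8) 10 ^ k * c)%N.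
Proof.
move=> H. under eq_bigr do rewrite mxE.
rewrite exchange_big /=. apply: eq_bigr => k _. by rewrite -big_distrr /= H.
Qed.

Lemma line_sq n (D : nat -> nat -> nat -> nat) m (f g : 'I_m -> 'I_n.+1) (P : nat -> nat -> nat) :
  (forall k l, k < 8 -> l < 8 ->
     (\sum_(i < m) D k (f i) (g i) * D l (f i) (g i))%N = P k l) ->
  (\sum_(i < m) (mkA n D (f i) (g i)) ^ 2)%N =
  (\sum_(k < 8) \sum_(l < 8) 10 ^ k * 10 ^ l * P k l)%N.
Proof.
move=> H. under eq_bigr => i _ do rewrite mxE -mulnn big_distrl /=.
under eq_bigr do under eq_bigr do rewrite big_distrr /=.
rewrite exchange_big; apply: eq_bigr => k _.
rewrite exchange_big; apply: eq_bigr => l _.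
rewrite -H // big_distrr; apply: eq_bigr => i _ /=.
by rewrite mulnACA.
Qed.

Lemma magic_gen n (D : nat -> nat -> nat -> nat) c :
 (forall k i, k < 8 -> i < n.+1 -> (\sum_(j < n.+1) D k i j)%N = c) ->
 (forall k j, k < 8 -> j < n.+1 -> (\sum_(i < n.+1) D k i j)%N = c) ->
 (forall k, k < 8 -> (\sum_(i < n.+1) D k i i)%N = c) ->
 (forall k, k < 8 -> (\sum_(i < n.+1) D k i (n.+1 - i.+1))%N = c) ->
 magic_with (mkA n D) (\sum_(k < 8) 10 ^ k * c)%N.
Proof.
move=> Hr Hc Hd Ha; split; [move=> i|split; [move=> j|split]].
- apply: (@line_gen _ _ _ (fun _ => i) (id)) => k Hk; exact: Hr.
- apply: (@line_gen _ _ _ (id) (fun _ => j)) => k Hk; exact: Hc.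
- apply: (@line_gen _ _ _ (id) (id)) => k Hk; exact: Hd.
- apply: (@line_gen _ _ _ (id) (fun i => rev_ord i)) => k Hk; exact: Ha.
Qed.

Lemma sq_gen n (D : nat -> nat -> nat -> nat) (P : nat -> nat -> nat) :
 (forall k l i, k < 8 -> l < 8 -> i < n.+1 ->
    (\sum_(j < n.+1) D k i j * D l i j)%N = P k l) ->
 (forall k l j, k < 8 -> l < 8 -> j < n.+1 ->
    (\sum_(i < n.+1) D k i j * D l i j)%N = P k l) ->
 (forall k l, k < 8 -> l < 8 -> (\sum_(i < n.+1) D k i i * D l i i)%N = P k l) ->
 (forall k l, k < 8 -> l < 8 ->
    (\sum_(i < n.+1) D k i (n.+1 - i.+1) * D l i (n.+1 - i.+1))%N = P k l) ->
 magic_with (map_mx (fun x => x ^ 2) (mkA n D))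
   (\sum_(k < 8) \sum_(l < 8) 10 ^ k * 10 ^ l * P k l)%N.
Proof.
move=> Hr Hc Hd Ha; split; [move=> i|split; [move=> j|split]];
  rewrite /row_sum /col_sum /diag_sum /antidiag_sum;
  under eq_bigr do rewrite [map_mx _ _ _ _]mxE.
- apply: (@line_sq _ _ _ (fun _ => i) (id)) => k l Hk Hl; exact: Hr.
- apply: (@line_sq _ _ _ (id) (fun _ => j)) => k l Hk Hl; exact: Hc.
- apply: (@line_sq _ _ _ (id) (id)) => k l Hk Hl; exact: Hd.
- apply: (@line_sq _ _ _ (id) (fun i => rev_ord i)) => k l Hk Hl; exact: Ha.
Qed.

Lemma block_gen n m (D : nat -> nat -> nat -> nat) c :
 (forall k p q i, k < 8 -> p < m.+1 -> q < m.+1 -> i < m.+1 ->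
   (\sum_(j < m.+1) D k (ival n (m.+1 * p + i)) (ival n (m.+1 * q + j)))%N = c) ->
 (forall k p q j, k < 8 -> p < m.+1 -> q < m.+1 -> j < m.+1 ->
   (\sum_(i < m.+1) D k (ival n (m.+1 * p + i)) (ival n (m.+1 * q + j)))%N = c) ->
 (forall k p q, k < 8 -> p < m.+1 -> q < m.+1 ->
   (\sum_(i < m.+1) D k (ival n (m.+1 * p + i)) (ival n (m.+1 * q + i)))%N = c) ->
 (forall k p q, k < 8 -> p < m.+1 -> q < m.+1 ->
   (\sum_(i < m.+1) D k (ival n (m.+1 * p + i))
        (ival n (m.+1 * q + (m.+1 - i.+1))))%N = c) ->
 forall p q : 'I_m.+1, magic_with (block (mkA n D) p q) (\sum_(k < 8) 10 ^ k * c)%N.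
Proof.
move=> Hr Hc Hd Ha p q; split; [move=> i|split; [move=> j|split]];
  rewrite /row_sum /col_sum /diag_sum /antidiag_sum;
  under eq_bigr do rewrite [block _ _ _ _ _]mxE.
- apply: (@line_gen _ _ _ (fun _ => inord (m.+1 * p + i)) (fun j => inord (m.+1 * q + j))) => k Hk.
  under eq_bigr do rewrite !inordE. exact: Hr.
- apply: (@line_gen _ _ _ (fun i => inord (m.+1 * p + i)) (fun _ => inord (m.+1 * q + j))) => k Hk.
  under eq_bigr do rewrite !inordE. exact: Hc.
- apply: (@line_gen _ _ _ (fun i => inord (m.+1 * p + i)) (fun i => inord (m.+1 * q + i))) => k Hk.
  under eq_bigr do rewrite !inordE. exact: Hd.
- apply: (@line_gen _ _ _ (fun i => inord (m.+1 * p + i)) (fun i : 'I_m.+1 => inord (m.+1 * q + rev_ord i))) => k Hk.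
  under eq_bigr do rewrite !inordE. exact: Ha.
Qed.

Lemma pan_gen n (D : nat -> nat -> nat -> nat) c :
 (forall k t, k < 8 -> t < n.+1 ->
   (\sum_(i < n.+1) D k i (ival n ((i + t) %% n.+1)))%N = c) ->
 (forall k t, k < 8 -> t < n.+1 ->
   (\sum_(i < n.+1) D k i (ival n ((t + n.+1 - i) %% n.+1)))%N = c) ->
 pandiagonal_with (mkA n D) (\sum_(k < 8) 10 ^ k * c)%N.
Proof.
move=> H1 H2 t; split.
- apply: (@line_gen _ _ _ (id) (fun i => inord ((i + t) %% n.+1))) => k Hk.
  under eq_bigr do rewrite !inordE. exact: H1.
- apply: (@line_gen _ _ _ (id) (fun i => inord ((t + n.+1 - i) %% n.+1))) => k Hk.
  under eq_bigr do rewrite !inordE. exact: H2.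
Qed.

Lemma digitE n (d : nat -> nat) m : (forall k, d k < 10) ->
  (\sum_(k < n) 10 ^ k * d k) %/ 10 ^ m %% 10 = if m < n then d m else 0.
Proof.
elim: n d m => [|n IH] d m Hd; first by rewrite big_ord0 div0n mod0n.
rewrite big_ord_recl expn0 mul1n.
rewrite (eq_bigr (fun i : 'I_n => 10 * (10 ^ i * d i.+1))); last first.
  by move=> i _; rewrite (_ : 10 ^ bump 0 i * d (bump 0 i) = 10 ^ i.+1 * d i.+1) // expnS mulnA.
rewrite -big_distrr /=.
case: m => [|m].
  by rewrite expn0 divn1 mulnC addnC modnMDl modn_small.
rewrite expnS divnMA addnC mulnC divnMDl // (divn_small (Hd 0)) addn0.
by rewrite (IH (fun k => d k.+1)).
Qed.

Definition chk1 m (P : nat -> bool) := all P (iota 0 m).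
Definition chk2 m1 m2 (P : nat -> nat -> bool) := all (fun a => chk1 m2 (P a)) (iota 0 m1).
Definition chk3 m1 m2 m3 (P : nat -> nat -> nat -> bool) :=
  all (fun a => chk2 m2 m3 (P a)) (iota 0 m1).
Definition chk4 m1 m2 m3 m4 (P : nat -> nat -> nat -> nat -> bool) :=
  all (fun a => chk3 m2 m3 m4 (P a)) (iota 0 m1).

Lemma chk1P m P : chk1 m P -> forall a, a < m -> P a.
Proof. by move=> /allP H a Ha; apply: H; rewrite mem_iota add0n. Qed.
Lemma chk2P m1 m2 P : chk2 m1 m2 P -> forall a b, a < m1 -> b < m2 -> P a b.
Proof. move=> H a b Ha Hb; have H1 : chk1 m2 (P a) := @chk1P _ _ H a Ha; exact: (@chk1P _ _ H1 b Hb). Qed.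
Lemma chk3P m1 m2 m3 P : chk3 m1 m2 m3 P ->
  forall a b c, a < m1 -> b < m2 -> c < m3 -> P a b c.
Proof. move=> H a b c Ha; have H1 : chk2 m2 m3 (P a) := @chk1P _ _ H a Ha; exact: (@chk2P _ _ _ H1 b c). Qed.
Lemma chk4P m1 m2 m3 m4 P : chk4 m1 m2 m3 m4 P ->
  forall a b c d, a < m1 -> b < m2 -> c < m3 -> d < m4 -> P a b c d.
Proof. move=> H a b c d Ha; have H1 : chk3 m2 m3 m4 (P a) := @chk1P _ _ H a Ha; exact: (@chk3P _ _ _ _ H1 b c d). Qed.

Lemma sumchk m (G : nat -> nat) c : nsum m G == c -> (\sum_(j < m) G j)%N = c.
Proof. by rewrite nsumE => /eqP. Qed.

Definition digs (D : nat -> nat -> nat -> nat) i j := [seq D k i j | k <- iota 0 8].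
Definition injchk (D : nat -> nat -> nat -> nat) i j i' j' :=
  (digs D i j == digs D i' j') ==> ((i == i') && (j == j')).

Lemma digits_gen n (D : nat -> nat -> nat -> nat) :
  (forall k i j, D k i j <= 2) -> entries_digits012 (mkA n D).
Proof.
move=> Hle i j k; rewrite mxE.
have Hlt : forall k, D k i j < 10 by move=> k'; apply: leq_ltn_trans (Hle k' i j) _.
rewrite (digitE 8 (fun k => D k i j) k Hlt); case: ifP => // _; exact: Hle.
Qed.

Lemma inj_gen n (D : nat -> nat -> nat -> nat) :
  (forall k i j, D k i j <= 2) -> chk4 n.+1 n.+1 n.+1 n.+1 (injchk D) ->
  distinct_entries (mkA n D).
Proof.
move=> Hle Hc [i j] [i' j'] /= E.
have Hlt : forall i j k, D k i j < 10 by move=> *; apply: leq_ltn_trans (Hle _ _ _) _.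
have Hd : forall m, m < 8 -> D m i j = D m i' j'.
  move=> m Hm; have := congr1 (fun x => x %/ 10 ^ m %% 10) E; rewrite /= !mxE.
  by rewrite (digitE 8 (fun k => D k i j) m (Hlt i j)) (digitE 8 (fun k => D k i' j') m (Hlt i' j')) Hm.
have Hdg : digs D i j = digs D i' j'.
  by rewrite /digs; apply/eq_in_map => x; rewrite mem_iota add0n => /andP[_ Hx]; apply: Hd.
have := @chk4P _ _ _ _ _ Hc _ _ _ _ (ltn_ord i) (ltn_ord j) (ltn_ord i') (ltn_ord j').
rewrite /injchk Hdg eqxx /= => /andP[/eqP Hi /eqP Hj].
by rewrite (ord_inj Hi) (ord_inj Hj).
Qed.

Lemma numE c d : (\sum_(k < 8) 10 ^ k * c)%N = d ->
  (\sum_(k < 8) 10 ^ k * c)%N = d.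
Proof. by []. Qed.

Lemma S20 : (\sum_(k < 8) 10 ^ k * 20)%N = 222222220.
Proof.
rewrite !big_ord_recr big_ord0 /=.
cbv [Nat.of_num_uint]. rewrite DecimalNat.Unsigned.of_uint_alt.
cbv [DecimalNat.Unsigned.of_lu Decimal.rev Decimal.revapp].
lia.
Qed.
Lemma S5 : (\sum_(k < 8) 10 ^ k * 5)%N = 55555555.
Proof.
rewrite !big_ord_recr big_ord0 /=.
cbv [Nat.of_num_uint]. rewrite DecimalNat.Unsigned.of_uint_alt.
cbv [DecimalNat.Unsigned.of_lu Decimal.rev Decimal.revapp].
lia.
Qed.
Lemma S4 : (\sum_(k < 8) 10 ^ k * 4)%N = 44444444.
Proof.
rewrite !big_ord_recr big_ord0 /=.
cbv [Nat.of_num_uint]. rewrite DecimalNat.Unsigned.of_uint_alt.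
cbv [DecimalNat.Unsigned.of_lu Decimal.rev Decimal.revapp].
lia.
Qed.

Definition gm4 := [:: [:: 0; 0; 0; 0]; [:: 0; 1; 2; 3]; [:: 0; 2; 3; 1]; [:: 0; 3; 1; 2]].
Definition ga4 := [:: [:: 0; 1; 2; 3]; [:: 1; 0; 3; 2]; [:: 2; 3; 0; 1]; [:: 3; 2; 1; 0]].
Definition gm x y := nth 0 (nth [::] gm4 x) y.
Definition ga x y := nth 0 (nth [::] ga4 x) y.
Definition F4 := [:: [:: 0; 1; 0; 2]; [:: 1; 1; 2; 2]; [:: 1; 2; 3; 1]; [:: 1; 3; 3; 2]].
Definition H4 := [:: [:: 0; 1; 2; 2]; [:: 1; 2; 0; 2]].
Definition f4 (f : seq nat) i j :=
  ga (ga (gm (nth 0 f 0) (i %/ 4)) (gm (nth 0 f 1) (i %% 4)))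
     (ga (gm (nth 0 f 2) (j %/ 4)) (gm (nth 0 f 3) (j %% 4))).
Definition D4 k i j := minn 2 (nth 0 (nth [::] H4 (k %% 2)) (f4 (nth [::] F4 (k %/ 2)) i j)).

Definition F5 := [:: [:: 1; 1; 2; 2]; [:: 1; 2; 2; 4]; [:: 1; 3; 3; 4]; [:: 1; 4; 3; 2]].
Definition H5 := [:: [:: 0; 0; 1; 1; 2]; [:: 0; 1; 0; 1; 2]].
Definition f5 (f : seq nat) i j :=
  (nth 0 f 0 * (i %/ 5) + nth 0 f 1 * (i %% 5) + nth 0 f 2 * (j %/ 5) + nth 0 f 3 * (j %% 5)) %% 5.
Definition D5 k i j := minn 2 (nth 0 (nth [::] H5 (k %% 2)) (f5 (nth [::] F5 (k %/ 2)) i j)).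

Lemma D4le k i j : D4 k i j <= 2. Proof. exact: geq_minl. Qed.
Lemma D5le k i j : D5 k i j <= 2. Proof. exact: geq_minl. Qed.

Definition rowc N (D : nat -> nat -> nat -> nat) c k i := nsum N (fun j => D k i j) == c.
Definition colc N (D : nat -> nat -> nat -> nat) c k j := nsum N (fun i => D k i j) == c.
Definition diagc N (D : nat -> nat -> nat -> nat) c k := nsum N (fun i => D k i i) == c.
Definition antic N (D : nat -> nat -> nat -> nat) c k := nsum N (fun i => D k i (N - i.+1)) == c.
Definition rowq N (D : nat -> nat -> nat -> nat) (P : nat -> nat -> nat) k l i :=
  nsum N (fun j => D k i j * D l i j) == P k l.
Definition colq N (D : nat -> nat -> nat -> nat) (P : nat -> nat -> nat) k l j :=
  nsum N (fun i => D k i j * D l i j) == P k l.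
Definition diagq N (D : nat -> nat -> nat -> nat) (P : nat -> nat -> nat) k l :=
  nsum N (fun i => D k i i * D l i i) == P k l.
Definition antiq N (D : nat -> nat -> nat -> nat) (P : nat -> nat -> nat) k l :=
  nsum N (fun i => D k i (N - i.+1) * D l i (N - i.+1)) == P k l.
Definition brow n M (D : nat -> nat -> nat -> nat) c k p q i :=
  nsum M (fun j => D k (ival n (M * p + i)) (ival n (M * q + j))) == c.
Definition bcol n M (D : nat -> nat -> nat -> nat) c k p q j :=
  nsum M (fun i => D k (ival n (M * p + i)) (ival n (M * q + j))) == c.
Definition bdiag n M (D : nat -> nat -> nat -> nat) c k p q :=
  nsum M (fun i => D k (ival n (M * p + i)) (ival n (M * q + i))) == c.
Definition banti n M (D : nat -> nat -> nat -> nat) c k p q :=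
  nsum M (fun i => D k (ival n (M * p + i)) (ival n (M * q + (M - i.+1)))) == c.
Definition pan1 n (D : nat -> nat -> nat -> nat) c k t :=
  nsum n.+1 (fun i => D k i (ival n ((i + t) %% n.+1))) == c.
Definition pan2 n (D : nat -> nat -> nat -> nat) c k t :=
  nsum n.+1 (fun i => D k i (ival n ((t + n.+1 - i) %% n.+1))) == c.

Lemma bimagic_all n (D : nat -> nat -> nat -> nat) c (P : nat -> nat -> nat) :
  chk2 8 n.+1 (rowc n.+1 D c) -> chk2 8 n.+1 (colc n.+1 D c) ->
  chk1 8 (diagc n.+1 D c) -> chk1 8 (antic n.+1 D c) ->
  chk3 8 8 n.+1 (rowq n.+1 D P) -> chk3 8 8 n.+1 (colq n.+1 D P) ->
  chk2 8 8 (diagq n.+1 D P) -> chk2 8 8 (antiq n.+1 D P) ->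
  bimagic_with (mkA n D) (\sum_(k < 8) 10 ^ k * c)%N.
Proof.
move=> R C Dg A Rq Cq Dq Aq; split.
  apply: magic_gen.
  - by move=> k i Hk Hi; apply: (@sumchk _ (fun x => D k i x) _); exact: (@chk2P _ _ _ R _ _ Hk Hi).
  - by move=> k i Hk Hi; apply: (@sumchk _ (fun x => D k x i) _); exact: (@chk2P _ _ _ C _ _ Hk Hi).
  - by move=> k Hk; apply: (@sumchk _ (fun x => D k x x) _); exact: (@chk1P _ _ Dg _ Hk).
  - by move=> k Hk; apply: (@sumchk _ (fun x => D k x (n.+1 - x.+1)) _); exact: (@chk1P _ _ A _ Hk).
exists (\sum_(k < 8) \sum_(l < 8) 10 ^ k * 10 ^ l * P k l)%N.
apply: (@sq_gen n D P).
- by move=> k l i Hk Hl Hi; apply: (@sumchk _ (fun x => D k i x * D l i x) _); exact: (@chk3P _ _ _ _ Rq _ _ _ Hk Hl Hi).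
- by move=> k l i Hk Hl Hi; apply: (@sumchk _ (fun x => D k x i * D l x i) _); exact: (@chk3P _ _ _ _ Cq _ _ _ Hk Hl Hi).
- by move=> k l Hk Hl; apply: (@sumchk _ (fun x => D k x x * D l x x) _); exact: (@chk2P _ _ _ Dq _ _ Hk Hl).
- by move=> k l Hk Hl; apply: (@sumchk _ (fun x => D k x (n.+1 - x.+1) * D l x (n.+1 - x.+1)) _); exact: (@chk2P _ _ _ Aq _ _ Hk Hl).
Qed.

Lemma block_all n m (D : nat -> nat -> nat -> nat) c :
  chk4 8 m.+1 m.+1 m.+1 (brow n m.+1 D c) -> chk4 8 m.+1 m.+1 m.+1 (bcol n m.+1 D c) ->
  chk3 8 m.+1 m.+1 (bdiag n m.+1 D c) -> chk3 8 m.+1 m.+1 (banti n m.+1 D c) ->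
  forall p q : 'I_m.+1, magic_with (block (mkA n D) p q) (\sum_(k < 8) 10 ^ k * c)%N.
Proof.
move=> R C Dg A; apply: block_gen.
- by move=> k p q i Hk Hp Hq Hi; apply: (@sumchk _ (fun x => D k (ival n (m.+1 * p + i)) (ival n (m.+1 * q + x))) _); exact: (@chk4P _ _ _ _ _ R _ _ _ _ Hk Hp Hq Hi).
- by move=> k p q i Hk Hp Hq Hi; apply: (@sumchk _ (fun x => D k (ival n (m.+1 * p + x)) (ival n (m.+1 * q + i))) _); exact: (@chk4P _ _ _ _ _ C _ _ _ _ Hk Hp Hq Hi).
- by move=> k p q Hk Hp Hq; apply: (@sumchk _ (fun x => D k (ival n (m.+1 * p + x)) (ival n (m.+1 * q + x))) _); exact: (@chk3P _ _ _ _ Dg _ _ _ Hk Hp Hq).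
- by move=> k p q Hk Hp Hq; apply: (@sumchk _ (fun x => D k (ival n (m.+1 * p + x)) (ival n (m.+1 * q + (m.+1 - x.+1)))) _); exact: (@chk3P _ _ _ _ A _ _ _ Hk Hp Hq).
Qed.

Lemma pan_all n (D : nat -> nat -> nat -> nat) c :
  chk2 8 n.+1 (pan1 n D c) -> chk2 8 n.+1 (pan2 n D c) ->
  pandiagonal_with (mkA n D) (\sum_(k < 8) 10 ^ k * c)%N.
Proof.
move=> H1 H2; apply: pan_gen.
- by move=> k t Hk Ht; apply: (@sumchk _ (fun x => D k x (ival n ((x + t) %% n.+1))) _); exact: (@chk2P _ _ _ H1 _ _ Hk Ht).
- by move=> k t Hk Ht; apply: (@sumchk _ (fun x => D k x (ival n ((t + n.+1 - x) %% n.+1))) _); exact: (@chk2P _ _ _ H2 _ _ Hk Ht).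
Qed.

Definition P4 k l := nsum 16 (fun j => D4 k 0 j * D4 l 0 j).
Definition P5 k l := nsum 25 (fun j => D5 k 0 j * D5 l 0 j).

Lemma c4r : chk2 8 16 (rowc 16 D4 20). Proof. by vm_compute. Qed.
Lemma c4c : chk2 8 16 (colc 16 D4 20). Proof. by vm_compute. Qed.
Lemma c4d : chk1 8 (diagc 16 D4 20). Proof. by vm_compute. Qed.
Lemma c4a : chk1 8 (antic 16 D4 20). Proof. by vm_compute. Qed.
Lemma c4rq : chk3 8 8 16 (rowq 16 D4 P4). Proof. by vm_compute. Qed.
Lemma c4cq : chk3 8 8 16 (colq 16 D4 P4). Proof. by vm_compute. Qed.
Lemma c4dq : chk2 8 8 (diagq 16 D4 P4). Proof. by vm_compute. Qed.
Lemma c4aq : chk2 8 8 (antiq 16 D4 P4). Proof. by vm_compute. Qed.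
Lemma c4br : chk4 8 4 4 4 (brow 15 4 D4 5). Proof. by vm_compute. Qed.
Lemma c4bc : chk4 8 4 4 4 (bcol 15 4 D4 5). Proof. by vm_compute. Qed.
Lemma c4bd : chk3 8 4 4 (bdiag 15 4 D4 5). Proof. by vm_compute. Qed.
Lemma c4ba : chk3 8 4 4 (banti 15 4 D4 5). Proof. by vm_compute. Qed.
Lemma c4inj : chk4 16 16 16 16 (injchk D4). Proof. by vm_compute. Qed.

Lemma c5r : chk2 8 25 (rowc 25 D5 20). Proof. by vm_compute. Qed.
Lemma c5c : chk2 8 25 (colc 25 D5 20). Proof. by vm_compute. Qed.
Lemma c5d : chk1 8 (diagc 25 D5 20). Proof. by vm_compute. Qed.
Lemma c5a : chk1 8 (antic 25 D5 20). Proof. by vm_compute. Qed.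
Lemma c5rq : chk3 8 8 25 (rowq 25 D5 P5). Proof. by vm_compute. Qed.
Lemma c5cq : chk3 8 8 25 (colq 25 D5 P5). Proof. by vm_compute. Qed.
Lemma c5dq : chk2 8 8 (diagq 25 D5 P5). Proof. by vm_compute. Qed.
Lemma c5aq : chk2 8 8 (antiq 25 D5 P5). Proof. by vm_compute. Qed.
Lemma c5br : chk4 8 5 5 5 (brow 24 5 D5 4). Proof. by vm_compute. Qed.
Lemma c5bc : chk4 8 5 5 5 (bcol 24 5 D5 4). Proof. by vm_compute. Qed.
Lemma c5bd : chk3 8 5 5 (bdiag 24 5 D5 4). Proof. by vm_compute. Qed.
Lemma c5ba : chk3 8 5 5 (banti 24 5 D5 4). Proof. by vm_compute. Qed.
Lemma c5p1 : chk2 8 25 (pan1 24 D5 20). Proof. by vm_compute. Qed.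
Lemma c5p2 : chk2 8 25 (pan2 24 D5 20). Proof. by vm_compute. Qed.
Lemma c5inj : chk4 25 25 25 25 (injchk D5). Proof. by vm_compute. Qed.

Theorem mainTheorem7 :
  (exists A : 'M[nat]_16,
      bimagic_with A 222222220 /\
      distinct_entries A /\ entries_digits012 A /\
      forall p q : 'I_4, magic_with (block A p q) 55555555)
  /\
  (exists B : 'M[nat]_25,
      bimagic_with B 222222220 /\
      pandiagonal_with B 222222220 /\
      distinct_entries B /\ entries_digits012 B /\
      forall p q : 'I_5, magic_with (block B p q) 44444444).
Proof.
split.
- exists (mkA 15 D4); rewrite -S20 -S5; split.
    exact: (@bimagic_all _ _ _ _ c4r c4c c4d c4a c4rq c4cq c4dq c4aq).
  split; first exact: (@inj_gen _ _ D4le c4inj).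
  split; first exact: (@digits_gen _ _ D4le).
  exact: (@block_all _ _ _ _ c4br c4bc c4bd c4ba).
- exists (mkA 24 D5); rewrite -S20 -S4; split.
    exact: (@bimagic_all _ _ _ _ c5r c5c c5d c5a c5rq c5cq c5dq c5aq).
  split; first exact: (@pan_all _ _ _ c5p1 c5p2).
  split; first exact: (@inj_gen _ _ D5le c5inj).
  split; first exact: (@digits_gen _ _ D5le).
  exact: (@block_all _ _ _ _ c5br c5bc c5bd c5ba).
Qed.
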